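(* In the setting where $X_1,\dots,X_n$ are i.i.d. from $p\in\Delta([k])$, $b_1,\dots,b_n$ are the $\varepsilon$-RAPPOR outputs, $N_x=\sum_{j=1}^n\mathbf 1\{b_{jx}=1\}$, $\lambda=\alpha_R/k+\beta_R$ and $T=\sum_{x\in[k]}\big((N_x-(n-1)\lambda)^2-N_x\big)+k(n-1)\lambda^2$, we have $$\mathrm{Var}[T]\le 4kn^2+8n^3\alpha_R^2\|p-u\|_2^2.$$
   Context: $\Delta([k])$ is the set of probability distributions on $[k]=\{1,\dots,k\}$, $u$ the uniform distribution on $[k]$. The $\varepsilon$-RAPPOR mechanism ($\varepsilon>0$) maps $x\in[k]$ to a random vector $b\in\{0,1\}^k$ obtained from the one-hot vector $e_x$ by flipping each coordinate independently with probability $\beta_R=1/(e^{\varepsilon/2}+1)$; the mechanism is applied independently for each user. Set $\alpha_R=(e^{\varepsilon/2}-1)/(e^{\varepsilon/2}+1)$. *)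

(* Defs.v *)
From HB Require Import structures.
From Stdlib Require Import Reals.
From mathcomp Require Import all_boot.
Set Implicit Arguments. Unset Strict Implicit. Unset Printing Implicit Defensive.
Local Open Scope R_scope.

Definition betaR (eps : R) : R := / (exp (eps / 2) + 1).
Definition alphaR (eps : R) : R := (exp (eps / 2) - 1) / (exp (eps / 2) + 1).

Definition is_dist (k : nat) (p : 'I_k -> R) : Prop :=
  (forall i, 0 <= p i) /\ \big[Rplus/0]_(i < k) p i = 1.

(* Joint outcome: inputs X_1..X_n and RAPPOR outputs b_1..b_n in {0,1}^k *)
Definition sample (k n : nat) : finType :=
  ({ffun 'I_n -> 'I_k} * {ffun 'I_n -> {ffun 'I_k -> bool}})%type.

(* probability that a bit of e_x is reported as [bit] given its true value [target] *)
Definition flip_prob (eps : R) (bit target : bool) : R :=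
  if bit == target then 1 - betaR eps else betaR eps.

Definition prob (k n : nat) (p : 'I_k -> R) (eps : R) (w : sample k n) : R :=
  \big[Rmult/1]_(j < n)
     (p (w.1 j) * \big[Rmult/1]_(x < k) flip_prob eps (w.2 j x) (x == w.1 j)).

Definition Exp (k n : nat) (p : 'I_k -> R) (eps : R) (f : sample k n -> R) : R :=
  \big[Rplus/0]_(w : sample k n) (prob p eps w * f w).

Definition Var (k n : nat) (p : 'I_k -> R) (eps : R) (f : sample k n -> R) : R :=
  Exp p eps (fun w => (f w - Exp p eps f) ^ 2).

Definition Ncount (k n : nat) (w : sample k n) (x : 'I_k) : R :=
  \big[Rplus/0]_(j < n) (if w.2 j x then 1 else 0).

Definition lam (k : nat) (eps : R) : R := alphaR eps / INR k + betaR eps.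

Definition Tstat (k n : nat) (eps : R) (w : sample k n) : R :=
  \big[Rplus/0]_(x < k)
     ((Ncount w x - (INR n - 1) * lam k eps) ^ 2 - Ncount w x)
  + INR k * (INR n - 1) * (lam k eps) ^ 2.

Definition dist2_unif (k : nat) (p : 'I_k -> R) : R :=
  \big[Rplus/0]_(x < k) (p x - / INR k) ^ 2.

(* Main.v *)
Require Import Defs.
From Stdlib Require Import Reals.
From mathcomp Require Import all_boot.
From HB Require Import structures.
From Stdlib Require Import Lra Lia Psatz.
Set Implicit Arguments. Unset Strict Implicit. Unset Printing Implicit Defensive.
Local Open Scope R_scope.

HB.instance Definition _ := Monoid.isComLaw.Build R 0 Rplus (fun a b c => esym (Rplus_assoc a b c)) Rplus_comm Rplus_0_l.
HB.instance Definition _ := Monoid.isComLaw.Build R 1 Rmult (fun a b c => esym (Rmult_assoc a b c)) Rmult_comm Rmult_1_l.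
HB.instance Definition _ := Monoid.isMulLaw.Build R 0 Rmult Rmult_0_l Rmult_0_r.
HB.instance Definition _ := Monoid.isAddLaw.Build R Rmult Rplus Rmult_plus_distr_r Rmult_plus_distr_l.

Lemma test (I : finType) (a : R) (F : I -> R) : a * \big[Rplus/0]_i F i = \big[Rplus/0]_i (a * F i).
Proof. by rewrite big_distrr. Qed.

Section Gen.
Variables (k n : nat) (p : 'I_k -> R) (eps : R).

Lemma Exp_ext (f g : sample k n -> R) : (forall w, f w = g w) -> Exp p eps f = Exp p eps g.
Proof. by move=> H; apply: eq_bigr => w _; rewrite H. Qed.

Lemma Exp_add (f g : sample k n -> R) :
  Exp p eps (fun w => f w + g w) = Exp p eps f + Exp p eps g.
Proof. by rewrite /Exp -big_split; apply: eq_bigr => w _ /=; ring. Qed.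

Lemma Exp_scal c (f : sample k n -> R) :
  Exp p eps (fun w => c * f w) = c * Exp p eps f.
Proof. by rewrite /Exp big_distrr; apply: eq_bigr => w _ /=; ring. Qed.

Lemma Exp_sum (I : finType) (F : I -> sample k n -> R) :
  Exp p eps (fun w => \big[Rplus/0]_i F i w) = \big[Rplus/0]_i Exp p eps (F i).
Proof.
rewrite /Exp (exchange_big). apply: eq_bigr => w _; by rewrite big_distrr.
Qed.

Definition UT := ('I_k * {ffun 'I_k -> bool})%type.
Definition rho (u : UT) : R :=
  p u.1 * \big[Rmult/1]_(x < k) flip_prob eps (u.2 x) (x == u.1).
Definition uj (w : sample k n) (j : 'I_n) : UT := (w.1 j, w.2 j).
Definition E1 (f : UT -> R) : R := \big[Rplus/0]_(u : UT) (rho u * f u).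

Lemma prodE (G : 'I_n -> UT -> R) :
  Exp p eps (fun w => \big[Rmult/1]_(j < n) G j (uj w j)) =
  \big[Rmult/1]_(j < n) E1 (G j).
Proof.
rewrite /Exp /E1.
transitivity (\big[Rplus/0]_(w : sample k n)
   \big[Rmult/1]_(j < n) (rho (uj w j) * G j (uj w j))).
  by apply: eq_bigr => w _; rewrite big_split.
rewrite -(pair_bigA _ (fun (f1 : {ffun 'I_n -> 'I_k}) (f2 : {ffun 'I_n -> {ffun 'I_k -> bool}}) => \big[Rmult/1]_(j < n) (rho (f1 j, f2 j) * G j (f1 j, f2 j)))) /=.
transitivity (\big[Rplus/0]_(f1 : {ffun 'I_n -> 'I_k}) \big[Rmult/1]_(j < n)
   \big[Rplus/0]_(b : {ffun 'I_k -> bool}) (rho (f1 j, b) * G j (f1 j, b))).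
  apply: eq_bigr => f1 _.
  by rewrite (bigA_distr_bigA (fun j b => rho (f1 j, b) * G j (f1 j, b))).
rewrite -(bigA_distr_bigA (fun j (a : 'I_k) => \big[Rplus/0]_(b : {ffun 'I_k -> bool}) (rho (a, b) * G j (a, b)))).
apply: eq_bigr => j _.
by rewrite (pair_bigA _ (fun (a : 'I_k) (b : {ffun 'I_k -> bool}) => rho (a, b) * G j (a, b))); apply: eq_bigr => -[a b].
Qed.
End Gen.

Definition Kr (b : bool) : R := if b then 1 else 0.

Ltac kring := rewrite /=; repeat (match goal with |- context [Kr ?b] => let t := fresh "t" in set t := Kr b end); ring.


Lemma prod_if (I : finType) (F : I -> R) x :
  \big[Rmult/1]_z (if z == x then F z else 1) = F x.
Proof. by rewrite -big_mkcond big_pred1_eq. Qed.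

Lemma sumK (I : finType) (F : I -> R) x :
  \big[Rplus/0]_z (Kr (z == x) * F z) = F x.
Proof.
rewrite (bigD1 x) //= eqxx big1 /Kr; first ring.
by move=> z /negbTE ->; ring.
Qed.

Lemma sumK' (I : finType) (F : I -> R) x :
  \big[Rplus/0]_z (Kr (x == z) * F z) = F x.
Proof. rewrite -(sumK F x); apply: eq_bigr => z _; by rewrite eq_sym. Qed.

Lemma sum_const m c : \big[Rplus/0]_(i < m) c = INR m * c.
Proof.
elim: m => [|m IH]; first by rewrite big_ord0 /=; ring.
by rewrite S_INR big_ord_recr IH /=; ring. Qed.

Lemma flip_sum e c : flip_prob e true c + flip_prob e false c = 1.
Proof. rewrite /flip_prob; case: c => /=; ring. Qed.

Section One.
Variables (k n : nat) (p : 'I_k -> R) (eps : R).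
Hypothesis Hp : is_dist p.
Hypothesis Heps : 0 < eps.

Local Notation E1 := (@E1 k p eps).
Local Notation rho := (@rho k p eps).

Lemma E1_ext f g : (forall u, f u = g u) -> E1 f = E1 g.
Proof. by move=> H; apply: eq_bigr => u _; rewrite H. Qed.

Lemma E1_add f g : E1 (fun u => f u + g u) = E1 f + E1 g.
Proof. by rewrite /E1 -big_split; apply: eq_bigr => u _ /=; ring. Qed.

Lemma E1_scal c f : E1 (fun u => c * f u) = c * E1 f.
Proof. by rewrite /E1 big_distrr; apply: eq_bigr => u _ /=; ring. Qed.

Lemma E1_split (g : 'I_k -> R) (h : 'I_k -> bool -> R) :
  E1 (fun u => g u.1 * \big[Rmult/1]_x h x (u.2 x)) =
  \big[Rplus/0]_a (p a * g a * \big[Rmult/1]_x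
     (flip_prob eps true (x == a) * h x true + flip_prob eps false (x == a) * h x false)).
Proof.
rewrite /E1 -(pair_bigA _ (fun (a : 'I_k) (b : {ffun 'I_k -> bool}) =>
   rho (a, b) * (g (a, b).1 * \big[Rmult/1]_x h x ((a, b).2 x)))).
apply: eq_bigr => a _ /=.
transitivity (p a * g a * \big[Rplus/0]_(b : {ffun 'I_k -> bool})
   \big[Rmult/1]_x (flip_prob eps (b x) (x == a) * h x (b x))).
  rewrite big_distrr; apply: eq_bigr => b _ /=; rewrite /rho /= big_split /=. set P1 := \big[_/_]_(_ < k) flip_prob _ _ _; set P2 := \big[_/_]_(_ < k) h _ _; ring.
congr (_ * _).
rewrite -(bigA_distr_bigA (fun x bt => flip_prob eps bt (x == a) * h x bt)).
by apply: eq_bigr => x _; rewrite big_bool.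
Qed.

Lemma sum_p : \big[Rplus/0]_a p a = 1.
Proof. by case: Hp. Qed.

Lemma E1_one : E1 (fun _ => 1) = 1.
Proof.
transitivity (E1 (fun u => (fun _ => 1) u.1 * \big[Rmult/1]_x (fun _ _ => 1) x (u.2 x))).
  by apply: E1_ext => u; rewrite big1_eq; ring.
rewrite (E1_split (fun _ => 1) (fun _ _ => 1)) -[X in _ = X]sum_p; apply: eq_bigr => a _.
rewrite big1 /=; first ring.
by move=> x _; rewrite !Rmult_1_r flip_sum.
Qed.

Definition q (x : 'I_k) : R := betaR eps + alphaR eps * p x.
Definition Bf (x : 'I_k) (u : UT k) : R := Kr (u.2 x).
Definition Zf (x : 'I_k) (u : UT k) : R := Bf x u - q x.
Definition C (x y : 'I_k) : R := E1 (fun u => Zf x u * Zf y u).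

Lemma alpha_beta : alphaR eps = 1 - 2 * betaR eps.
Proof. rewrite /alphaR /betaR; have := exp_pos (eps / 2) => H; field; lra. Qed.

Lemma t_eq (x a : 'I_k) :
  flip_prob eps true (x == a) = betaR eps + alphaR eps * Kr (x == a).
Proof. rewrite /flip_prob /Kr alpha_beta; case: (x == a) => /=; ring. Qed.

Lemma sum_lin (c d : R) (x : 'I_k) :
  \big[Rplus/0]_a (p a * (c + d * Kr (x == a))) = c + d * p x.
Proof.
transitivity (\big[Rplus/0]_a (c * p a) + d * \big[Rplus/0]_a (Kr (a == x) * p a)).
  rewrite big_distrr -big_split; apply: eq_bigr => a _ /=; rewrite eq_sym. set t := Kr _; ring.
by rewrite sumK -big_distrr sum_p /=; ring.
Qed.

Lemma E1_B x : E1 (Bf x) = q x.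
Proof.
transitivity (E1 (fun u => (fun _ => 1) u.1 * \big[Rmult/1]_z
      (fun z bt => if z == x then Kr bt else 1) z (u.2 z))).
  by apply: E1_ext => u /=; rewrite prod_if /Bf; ring.
rewrite (E1_split (fun _ => 1) (fun z bt => if z == x then Kr bt else 1)) /q -(sum_lin _ _ x); apply: eq_bigr => a _.
rewrite -t_eq -(prod_if (fun z => flip_prob eps true (z == a)) x).
congr (_ * _); first ring.
apply: eq_bigr => z _; case: (z == x) => /=; rewrite /Kr; last by rewrite !Rmult_1_r flip_sum.
ring.
Qed.


Lemma KK0 (x y a : 'I_k) : x != y -> Kr (x == a) * Kr (y == a) = 0.
Proof.
move=> H; rewrite /Kr; case: eqP => [<-|_]; last ring.
by rewrite eq_sym (negbTE H); ring.
Qed.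

Lemma E1_BB x y : x != y ->
  E1 (fun u => Bf x u * Bf y u) =
  betaR eps ^ 2 + alphaR eps * betaR eps * (p x + p y).
Proof.
move=> Hxy.
transitivity (E1 (fun u => (fun _ => 1) u.1 * \big[Rmult/1]_z
      (fun z bt => (if z == x then Kr bt else 1) * (if z == y then Kr bt else 1)) z (u.2 z))).
  by apply: E1_ext => u /=; rewrite big_split /= !prod_if /Bf; ring.
rewrite (E1_split (fun _ => 1) (fun z bt => (if z == x then Kr bt else 1) * (if z == y then Kr bt else 1))).
transitivity (\big[Rplus/0]_a (betaR eps ^ 2 * p a + alphaR eps * betaR eps * (Kr (a == x) * p a)
   + alphaR eps * betaR eps * (Kr (a == y) * p a))).
  apply: eq_bigr => a _.
  transitivity (p a * (flip_prob eps true (x == a) * flip_prob eps true (y == a))).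
    rewrite -(prod_if (fun z => flip_prob eps true (z == a)) x).
    rewrite -(prod_if (fun z => flip_prob eps true (z == a)) y) -big_split /=.
    rewrite Rmult_1_r; congr (_ * _); apply: eq_bigr => z _.
    case ex: (z == x); case ey: (z == y); rewrite /Kr /=.
    - by move: Hxy; rewrite -(eqP ex) -(eqP ey) eqxx.
    - ring.
    - ring.
    - by rewrite !Rmult_1_r flip_sum; ring.
  rewrite !t_eq.
  transitivity (betaR eps ^ 2 * p a + alphaR eps * betaR eps * (Kr (x == a) * p a)
   + alphaR eps * betaR eps * (Kr (y == a) * p a) + alphaR eps ^ 2 * (Kr (x == a) * Kr (y == a)) * p a).
    kring.
  rewrite KK0 // (eq_sym x) (eq_sym y); kring.
rewrite big_split big_split /= -!big_distrr /= sum_p !sumK; ring.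
Qed.

Lemma BB_same x u : Bf x u * Bf x u = Bf x u.
Proof. rewrite /Bf /Kr; case: (u.2 x); ring. Qed.

Lemma E1_Z x : E1 (Zf x) = 0.
Proof.
transitivity (E1 (fun u => Bf x u + (- q x) * (fun _ => 1) u)).
  by apply: E1_ext => u; rewrite /Zf; ring.
by rewrite E1_add E1_scal E1_one // E1_B; ring.
Qed.

Lemma C_eq x y : C x y = E1 (fun u => Bf x u * Bf y u) - q x * q y.
Proof.
rewrite /C.
transitivity (E1 (fun u => Bf x u * Bf y u + ((- q y) * Bf x u + ((- q x) * Bf y u + (q x * q y) * (fun _ => 1) u)))).
  by apply: E1_ext => u; rewrite /Zf; ring.
by rewrite !E1_add !E1_scal E1_one // !E1_B; ring.
Qed.

Lemma C_formula x y :
  C x y = Kr (x == y) * (q x - q x ^ 2 + alphaR eps ^ 2 * p x ^ 2) - alphaR eps ^ 2 * p x * p y.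
Proof.
rewrite C_eq; case: (eqVneq x y) => [<-|H].
  rewrite (E1_ext (BB_same x)) E1_B /Kr; ring.
rewrite E1_BB // /Kr /q alpha_beta; ring.
Qed.

Lemma E1_is1 f : (forall u, f u = 1) -> E1 f = 1.
Proof. by move=> H; rewrite -(E1_one) //; apply: E1_ext. Qed.

Lemma E1_isZ f x : (forall u, f u = Zf x u) -> E1 f = 0.
Proof. by move=> H; rewrite -(E1_Z x); apply: E1_ext. Qed.

Lemma E1_isC f x y : (forall u, f u = Zf x u * Zf y u) -> E1 f = C x y.
Proof. by move=> H; rewrite /C; apply: E1_ext. Qed.
End One.



Section Multi.
Variables (k n : nat) (p : 'I_k -> R) (eps : R).
Hypothesis Hp : is_dist p.
Hypothesis Heps : 0 < eps.

Local Notation E1 := (@E1 k p eps).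
Local Notation Exp := (@Exp k n p eps).
Local Notation Zf := (@Zf k p eps).
Local Notation C := (@C k p eps).

Definition Zs (j : 'I_n) (x : 'I_k) (w : sample k n) : R := Zf x (uj w j).
Definition sel (i j : 'I_n) (f : UT k -> R) (u : UT k) : R := if i == j then f u else 1.

Lemma prod_sel w j f : \big[Rmult/1]_i sel i j f (uj w i) = f (uj w j).
Proof. exact: (prod_if (fun i => f (uj w i))). Qed.

Lemma prodE_zero (G : 'I_n -> UT k -> R) i0 :
  E1 (G i0) = 0 -> \big[Rmult/1]_i E1 (G i) = 0.
Proof. by move=> H; rewrite (bigD1 i0) //= H; ring. Qed.

Lemma prodE_one (G : 'I_n -> UT k -> R) j :
  (forall i, i != j -> forall u, G i u = 1) -> \big[Rmult/1]_i E1 (G i) = E1 (G j).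
Proof.
move=> H; rewrite (bigD1 j) //= big1 /=; first ring.
by move=> i Hi; apply: (@E1_is1 k p eps Hp) => //; exact: H.
Qed.

Lemma prodE_two (G : 'I_n -> UT k -> R) j m : j != m ->
  (forall i, i != j -> i != m -> forall u, G i u = 1) ->
  \big[Rmult/1]_i E1 (G i) = E1 (G j) * E1 (G m).
Proof.
move=> Hjm H; rewrite (bigD1 j) //= (bigD1 m) /=; last by rewrite eq_sym.
rewrite big1 /=; first ring.
by move=> i /andP [Hi Hi']; apply: (@E1_is1 k p eps Hp) => //; exact: H.
Qed.

Lemma E2 j m x y : Exp (fun w => Zs j x w * Zs m y w) = Kr (j == m) * C x y.
Proof.
transitivity (Exp (fun w => \big[Rmult/1]_i
   (fun i u => sel i j (Zf x) u * sel i m (Zf y) u) i (uj w i))).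
  by apply: Exp_ext => w; rewrite big_split /= !prod_sel.
rewrite (@prodE k n p eps (fun i u => sel i j (Zf x) u * sel i m (Zf y) u)).
case: (eqVneq j m) => [<-|Hjm].
  rewrite (prodE_one (j := j)) /Kr.
    rewrite (@E1_isC k p eps _ x y) //; first ring.
    by move=> u; rewrite /sel eqxx.
  by move=> i Hi u; rewrite /sel (negbTE Hi); ring.
rewrite (prodE_zero (i0 := j)) /Kr; first ring.
apply: (@E1_isZ k p eps Hp _ x) => u.
by rewrite /sel eqxx (negbTE Hjm); ring.
Qed.
End Multi.


Section Multi2.
Variables (k n : nat) (p : 'I_k -> R) (eps : R).
Hypothesis Hp : is_dist p.
Hypothesis Heps : 0 < eps.

Local Notation E1 := (@E1 k p eps).
Local Notation Exp := (@Exp k n p eps).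
Local Notation Zf := (@Zf k p eps).
Local Notation C := (@C k p eps).
Local Notation Zs := (@Zs k n p eps).

Lemma E3 j l m x y : j != l -> Exp (fun w => Zs j x w * Zs l x w * Zs m y w) = 0.
Proof.
move=> Hjl.
transitivity (Exp (fun w => \big[Rmult/1]_i
   (fun i u => sel i j (Zf x) u * sel i l (Zf x) u * sel i m (Zf y) u) i (uj w i))).
  by apply: Exp_ext => w; rewrite !big_split /= !prod_sel.
rewrite (@prodE k n p eps (fun i u => sel i j (Zf x) u * sel i l (Zf x) u * sel i m (Zf y) u)).
case: (eqVneq m j) => [->|Hmj].
  apply: (@prodE_zero k n p eps _ l); apply: (@E1_isZ k p eps Hp _ x) => u.
  by rewrite /sel eqxx eq_sym (negbTE Hjl); ring.
apply: (@prodE_zero k n p eps _ j); apply: (@E1_isZ k p eps Hp _ x) => u.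
by rewrite /sel eqxx (negbTE Hjl) eq_sym (negbTE Hmj); ring.
Qed.

Lemma E4 j l j' l' x y : j != l -> j' != l' ->
  Exp (fun w => Zs j x w * Zs l x w * (Zs j' y w * Zs l' y w)) =
  (Kr (j' == j) * Kr (l' == l) + Kr (j' == l) * Kr (l' == j)) * C x y ^ 2.
Proof.
move=> Hjl Hjl'.
transitivity (Exp (fun w => \big[Rmult/1]_i
   (fun i u => sel i j (Zf x) u * sel i l (Zf x) u * (sel i j' (Zf y) u * sel i l' (Zf y) u)) i (uj w i))).
  by apply: Exp_ext => w; rewrite !big_split /= !prod_sel.
rewrite (@prodE k n p eps (fun i u => sel i j (Zf x) u * sel i l (Zf x) u * (sel i j' (Zf y) u * sel i l' (Zf y) u))).
have Hlj := Hjl; rewrite eq_sym in Hlj.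
case: (eqVneq j' j) => [Ej|Nj].
  subst j'.
  case: (eqVneq l' l) => [El|Nl].
    subst l'.
    rewrite (@prodE_two k n p eps Hp _ j l Hjl).
      rewrite (@E1_isC k p eps _ x y); last by move=> u; rewrite /sel eqxx (negbTE Hjl); ring.
      rewrite (@E1_isC k p eps _ x y); last by move=> u; rewrite /sel eqxx (negbTE Hlj); ring.
      rewrite ?eqxx ?(negbTE Hjl) ?(negbTE Hlj) /Kr; ring.
    by move=> i Hi Hi' u; rewrite /sel (negbTE Hi) (negbTE Hi'); ring.
  have H1 : (l' == j) = false by rewrite eq_sym; exact: negbTE.
  rewrite (@prodE_zero k n p eps _ l'); last first.
    apply: (@E1_isZ k p eps Hp _ y) => u.
    by rewrite /sel eqxx H1 (negbTE Nl); ring.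
  by rewrite (negbTE Hjl) /Kr; ring.
case: (eqVneq j' l) => [El|Nl].
  subst j'.
  case: (eqVneq l' j) => [Ej|Nj'].
    subst l'.
    rewrite (@prodE_two k n p eps Hp _ j l Hjl).
      rewrite (@E1_isC k p eps _ x y); last by move=> u; rewrite /sel eqxx (negbTE Hjl); ring.
      rewrite (@E1_isC k p eps _ x y); last by move=> u; rewrite /sel eqxx (negbTE Hlj); ring.
      rewrite ?eqxx ?(negbTE Hjl) ?(negbTE Hlj) /Kr; ring.
    by move=> i Hi Hi' u; rewrite /sel (negbTE Hi) (negbTE Hi'); ring.
  have H1 : (l' == l) = false by rewrite eq_sym; exact: negbTE.
  rewrite (@prodE_zero k n p eps _ l'); last first.
    apply: (@E1_isZ k p eps Hp _ y) => u.
    by rewrite /sel eqxx H1 (negbTE Nj'); ring.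
  by rewrite /Kr; ring.
rewrite (@prodE_zero k n p eps _ j'); last first.
  apply: (@E1_isZ k p eps Hp _ y) => u.
  by rewrite /sel eqxx (negbTE Nj) (negbTE Nl) (negbTE Hjl'); ring.
by rewrite /Kr; ring.
Qed.
End Multi2.


Section Sums.
Variables (k n : nat) (p : 'I_k -> R) (eps : R).
Hypothesis Hp : is_dist p.
Hypothesis Heps : 0 < eps.

Local Notation E1 := (@E1 k p eps).
Local Notation Exp := (@Exp k n p eps).
Local Notation Zf := (@Zf k p eps).
Local Notation C := (@C k p eps).
Local Notation Zs := (@Zs k n p eps).
Local Notation q := (@q k p eps).

Definition mu (x : 'I_k) : R := q x - lam k eps.
Definition W (j l : 'I_n) (w : sample k n) : R := \big[Rplus/0]_x (Zs j x w * Zs l x w).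
Definition V (j : 'I_n) (w : sample k n) : R := \big[Rplus/0]_x (mu x * Zs j x w).
Definition Fv : R := \big[Rplus/0]_x \big[Rplus/0]_y (C x y ^ 2).
Definition Qv : R := \big[Rplus/0]_x \big[Rplus/0]_y (mu x * mu y * C x y).
Definition ne (j l : 'I_n) : R := 1 - Kr (j == l).

Lemma EWW j l j' l' : j != l -> j' != l' ->
  Exp (fun w => W j l w * W j' l' w) =
  (Kr (j' == j) * Kr (l' == l) + Kr (j' == l) * Kr (l' == j)) * Fv.
Proof.
move=> H1 H2.
transitivity (Exp (fun w => \big[Rplus/0]_x \big[Rplus/0]_y
   (Zs j x w * Zs l x w * (Zs j' y w * Zs l' y w)))).
  by apply: Exp_ext => w; rewrite /W big_distrl; apply: eq_bigr => x _; rewrite big_distrr.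
rewrite Exp_sum /Fv big_distrr; apply: eq_bigr => x _.
rewrite Exp_sum big_distrr; apply: eq_bigr => y _.
exact: E4.
Qed.

Lemma EWV j l m : j != l -> Exp (fun w => W j l w * V m w) = 0.
Proof.
move=> H1.
transitivity (Exp (fun w => \big[Rplus/0]_x \big[Rplus/0]_y
   (mu y * (Zs j x w * Zs l x w * Zs m y w)))).
  apply: Exp_ext => w; rewrite /W /V big_distrl; apply: eq_bigr => x _; rewrite big_distrr.
  by apply: eq_bigr => y _ /=; ring.
rewrite Exp_sum big1 // => x _.
rewrite Exp_sum big1 // => y _.
by rewrite Exp_scal E3 //; ring.
Qed.

Lemma EVV j m : Exp (fun w => V j w * V m w) = Kr (j == m) * Qv.
Proof.
transitivity (Exp (fun w => \big[Rplus/0]_x \big[Rplus/0]_y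
   (mu x * mu y * (Zs j x w * Zs m y w)))).
  apply: Exp_ext => w; rewrite /V big_distrl; apply: eq_bigr => x _; rewrite big_distrr.
  by apply: eq_bigr => y _ /=; ring.
rewrite Exp_sum /Qv big_distrr; apply: eq_bigr => x _.
rewrite Exp_sum big_distrr; apply: eq_bigr => y _.
rewrite Exp_scal E2 //; kring.
Qed.

Definition Aw (w : sample k n) : R := \big[Rplus/0]_j \big[Rplus/0]_l (ne j l * W j l w).
Definition Bw (w : sample k n) : R := 2 * (INR n - 1) * \big[Rplus/0]_j V j w.

Lemma ne_sq j l : ne j l * ne j l = ne j l.
Proof. rewrite /ne /Kr; case: (j == l); ring. Qed.

Lemma ne_sym j l : ne l j = ne j l.
Proof. by rewrite /ne eq_sym. Qed.

Lemma sum_ne_row j : \big[Rplus/0]_l ne j l = INR n - 1.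
Proof.
transitivity (\big[Rplus/0]_(l < n) 1 + (-1) * \big[Rplus/0]_l (Kr (l == j) * 1)).
  rewrite big_distrr -big_split; apply: eq_bigr => l _ /=; rewrite /ne eq_sym; kring.
by rewrite sumK sum_const; ring.
Qed.

Lemma sum_ne : \big[Rplus/0]_j \big[Rplus/0]_l ne j l = INR n * (INR n - 1).
Proof.
transitivity (\big[Rplus/0]_(j < n) (INR n - 1)).
  by apply: eq_bigr => j _; rewrite sum_ne_row.
by rewrite sum_const.
Qed.

Lemma inner4 j l :
  \big[Rplus/0]_j' \big[Rplus/0]_l' (ne j l * ne j' l' *
     ((Kr (j' == j) * Kr (l' == l) + Kr (j' == l) * Kr (l' == j)) * Fv))
  = 2 * ne j l * Fv.
Proof.
transitivity (\big[Rplus/0]_j' (Kr (j' == j) * (ne j l * ne j' l * Fv) +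
                                 Kr (j' == l) * (ne j l * ne j' j * Fv))).
  apply: eq_bigr => j' _.
  transitivity (\big[Rplus/0]_l' (Kr (l' == l) * (ne j l * ne j' l' * Kr (j' == j) * Fv)
                 + Kr (l' == j) * (ne j l * ne j' l' * Kr (j' == l) * Fv))).
    by apply: eq_bigr => l' _; kring.
  rewrite big_split /= !sumK; kring.
rewrite big_split /= !sumK ne_sq (ne_sym j l) ne_sq; ring.
Qed.

Lemma EAA : Exp (fun w => Aw w * Aw w) = 2 * (INR n * (INR n - 1)) * Fv.
Proof.
transitivity (Exp (fun w => \big[Rplus/0]_j \big[Rplus/0]_l \big[Rplus/0]_j' \big[Rplus/0]_l'
    ((ne j l * ne j' l') * (W j l w * W j' l' w)))).
  apply: Exp_ext => w; rewrite {1}/Aw big_distrl; apply: eq_bigr => j _.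
  rewrite big_distrl; apply: eq_bigr => l _.
  rewrite /Aw big_distrr; apply: eq_bigr => j' _.
  rewrite big_distrr; apply: eq_bigr => l' _ /=; ring.
transitivity (\big[Rplus/0]_j \big[Rplus/0]_l \big[Rplus/0]_j' \big[Rplus/0]_l'
   (ne j l * ne j' l' * ((Kr (j' == j) * Kr (l' == l) + Kr (j' == l) * Kr (l' == j)) * Fv))).
  rewrite Exp_sum; apply: eq_bigr => j _.
  rewrite Exp_sum; apply: eq_bigr => l _.
  rewrite Exp_sum; apply: eq_bigr => j' _.
  rewrite Exp_sum; apply: eq_bigr => l' _.
  rewrite Exp_scal.
  case: (eqVneq j l) => [->|H1]; first by rewrite /ne eqxx /Kr; ring.
  case: (eqVneq j' l') => [->|H2]; first by rewrite /ne eqxx /Kr; ring.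
  by rewrite EWW.
transitivity (\big[Rplus/0]_j \big[Rplus/0]_l (2 * Fv * ne j l)).
  apply: eq_bigr => j _; apply: eq_bigr => l _; rewrite inner4; ring.
transitivity (2 * Fv * \big[Rplus/0]_j \big[Rplus/0]_l ne j l); last by rewrite sum_ne; ring.
by rewrite [RHS]big_distrr; apply: eq_bigr => j _; rewrite [RHS]big_distrr.
Qed.

Lemma EAB : Exp (fun w => Aw w * Bw w) = 0.
Proof.
transitivity (Exp (fun w => \big[Rplus/0]_j \big[Rplus/0]_l \big[Rplus/0]_m
    ((ne j l * (2 * (INR n - 1))) * (W j l w * V m w)))).
  apply: Exp_ext => w; rewrite /Aw big_distrl; apply: eq_bigr => j _.
  rewrite big_distrl; apply: eq_bigr => l _.
  rewrite /Bw.
  transitivity (ne j l * (2 * (INR n - 1)) * W j l w * \big[Rplus/0]_m V m w).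
    rewrite /=; ring.
  by rewrite big_distrr; apply: eq_bigr => m _ /=; ring.
rewrite Exp_sum big1 // => j _.
rewrite Exp_sum big1 // => l _.
rewrite Exp_sum big1 // => m _.
rewrite Exp_scal.
case: (eqVneq j l) => [->|H1]; first by rewrite /ne eqxx /Kr; ring.
by rewrite EWV //; ring.
Qed.

Lemma EBB : Exp (fun w => Bw w * Bw w) = 4 * (INR n - 1) ^ 2 * INR n * Qv.
Proof.
transitivity (Exp (fun w => \big[Rplus/0]_j \big[Rplus/0]_m
    ((2 * (INR n - 1)) ^ 2 * (V j w * V m w)))).
  apply: Exp_ext => w; rewrite /Bw.
  transitivity ((2 * (INR n - 1)) ^ 2 * ((\big[Rplus/0]_j V j w) * (\big[Rplus/0]_m V m w))).
    ring.
  rewrite big_distrl big_distrr; apply: eq_bigr => j _.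
  rewrite /= big_distrr big_distrr; apply: eq_bigr => m _ /=; ring.
transitivity (\big[Rplus/0]_(j < n) ((2 * (INR n - 1)) ^ 2 * Qv)); last first.
  rewrite sum_const; ring.
rewrite Exp_sum; apply: eq_bigr => j _.
rewrite Exp_sum.
transitivity (\big[Rplus/0]_m (Kr (j == m) * ((2 * (INR n - 1)) ^ 2 * Qv))).
  apply: eq_bigr => m _; rewrite Exp_scal EVV //; kring.
by rewrite sumK'.
Qed.
End Sums.


Lemma algid (N q l n : R) :
  (N - (n - 1) * l) ^ 2 - N + (n - 1) * l ^ 2 =
  n * (n - 1) * (q - l) ^ 2 + ((N - n * q) * (N - n * q) - (N * (1 - 2 * q) + n * q ^ 2))
  + 2 * (n - 1) * (q - l) * (N - n * q).
Proof. ring. Qed.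

Section Ident.
Variables (k n : nat) (p : 'I_k -> R) (eps : R).

Local Notation Zs := (@Zs k n p eps).
Local Notation q := (@q k p eps).
Local Notation mu := (@mu k p eps).
Local Notation Aw := (@Aw k n p eps).
Local Notation Bw := (@Bw k n p eps).

Lemma sum_ne_gen (F : 'I_n -> R) :
  \big[Rplus/0]_j \big[Rplus/0]_l (ne j l * (F j * F l)) =
  (\big[Rplus/0]_j F j) * (\big[Rplus/0]_l F l) - \big[Rplus/0]_j (F j * F j).
Proof.
transitivity (\big[Rplus/0]_j (\big[Rplus/0]_l (F j * F l) + (-1) * (F j * F j))).
  apply: eq_bigr => j _.
  transitivity (\big[Rplus/0]_l (F j * F l) + (-1) * \big[Rplus/0]_l (Kr (l == j) * (F j * F l))).
    rewrite big_distrr -big_split; apply: eq_bigr => l _ /=; rewrite /ne eq_sym; kring.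
  by rewrite sumK.
rewrite big_split /= big_distrl -big_distrr /=.
set S := \big[Rplus/0]_j (F j * F j).
transitivity (\big[Rplus/0]_j (\big[Rplus/0]_l (F j * F l)) - S); first by rewrite /=; ring.
congr (_ - _); apply: eq_bigr => j _; rewrite big_distrr //.
Qed.

Lemma sumZ w x : \big[Rplus/0]_j Zs j x w = Ncount w x - INR n * q x.
Proof.
rewrite /Zs /Zf /Bf /=.
transitivity (\big[Rplus/0]_j Kr (w.2 j x) + \big[Rplus/0]_(j < n) (- q x)).
  by rewrite -big_split.
rewrite sum_const; rewrite /Ncount /Kr /=; ring.
Qed.

Lemma sumZ2 w x : \big[Rplus/0]_j (Zs j x w * Zs j x w) =
  Ncount w x * (1 - 2 * q x) + INR n * q x ^ 2.
Proof.
rewrite /Zs /Zf /Bf /=.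
transitivity (\big[Rplus/0]_j (Kr (w.2 j x) * (1 - 2 * q x)) + \big[Rplus/0]_(j < n) (q x ^ 2)).
  rewrite -big_split; apply: eq_bigr => j _ /=; rewrite /Kr; case: (w.2 j x); ring.
rewrite sum_const -big_distrl; rewrite /Ncount /Kr /=; ring.
Qed.

Lemma Tident w :
  Tstat eps w = INR n * (INR n - 1) * \big[Rplus/0]_x (mu x ^ 2) + Aw w + Bw w.
Proof.
have HA : Aw w = \big[Rplus/0]_x ((Ncount w x - INR n * q x) * (Ncount w x - INR n * q x)
              - (Ncount w x * (1 - 2 * q x) + INR n * q x ^ 2)).
  rewrite /Aw.
  transitivity (\big[Rplus/0]_j \big[Rplus/0]_x \big[Rplus/0]_l (ne j l * (Zs j x w * Zs l x w))).
    apply: eq_bigr => j _.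
    transitivity (\big[Rplus/0]_l \big[Rplus/0]_x (ne j l * (Zs j x w * Zs l x w))).
      by apply: eq_bigr => l _; rewrite /W big_distrr.
    by rewrite exchange_big.
  rewrite exchange_big; apply: eq_bigr => x _.
  by rewrite (sum_ne_gen (fun j => Zs j x w)) sumZ sumZ2.
have HB : Bw w = \big[Rplus/0]_x (2 * (INR n - 1) * mu x * (Ncount w x - INR n * q x)).
  rewrite /Bw /V exchange_big big_distrr /=.
  apply: eq_bigr => x _; rewrite -sumZ -big_distrr /=; ring.
rewrite HA HB /Tstat.
have -> : INR k * (INR n - 1) * lam k eps ^ 2 = INR k * ((INR n - 1) * lam k eps ^ 2) by ring.
rewrite -(sum_const k ((INR n - 1) * lam k eps ^ 2)).
rewrite big_distrr /= -!big_split /=.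
apply: eq_bigr => x _ /=.
rewrite /mu (algid _ (q x)); ring.
Qed.
End Ident.


Lemma sum_le (I : finType) (F G : I -> R) :
  (forall i, F i <= G i) -> \big[Rplus/0]_i F i <= \big[Rplus/0]_i G i.
Proof.
move=> H; apply: (big_ind2 (fun a b => a <= b)) => //; first exact: Rle_refl.
by move=> *; lra.
Qed.

Lemma sum_ge0 (I : finType) (F : I -> R) :
  (forall i, 0 <= F i) -> 0 <= \big[Rplus/0]_i F i.
Proof.
move=> H; apply: (big_ind (fun a => 0 <= a)) => //; first exact: Rle_refl.
by move=> *; lra.
Qed.

Section Bounds.
Variables (k n : nat) (p : 'I_k -> R) (eps : R).
Hypothesis Hp : is_dist p.

Local Notation C := (@C k p eps).
Local Notation q := (@q k p eps).
Local Notation mu := (@mu k p eps).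
Local Notation Fv := (@Fv k p eps).
Local Notation Qv := (@Qv k p eps).

Lemma beta01 : 0 < betaR eps < 1.
Proof.
have He := exp_pos (eps / 2).
have H1 : betaR eps * (exp (eps / 2) + 1) = 1 by rewrite /betaR; field; lra.
have H2 : 0 < betaR eps by rewrite /betaR; apply: Rinv_0_lt_compat; lra.
split => //; nra.
Qed.

Lemma p01 x : 0 <= p x <= 1.
Proof.
case: Hp => H0 H1; split => //.
rewrite -H1 (bigD1 x) //=.
have : 0 <= \big[Rplus/0]_(i | i != x) p i.
  apply: (big_ind (fun a => 0 <= a)); [exact: Rle_refl | by move=> *; lra | by move=> i _; apply: H0].
move=> H; set s := \big[_/_]_(i | _) _ in H *; lra.
Qed.

Lemma q01 x : 0 <= q x <= 1.
Proof.
have [hb1 hb2] := beta01; have [hp1 hp2] := p01 x.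
rewrite /q alpha_beta; split; nra.
Qed.

Lemma alpha2 : alphaR eps ^ 2 <= 1.
Proof. have [hb1 hb2] := beta01; rewrite alpha_beta; nra. Qed.

Lemma Fv_le : (0 < k)%N -> Fv <= 2 * INR k.
Proof.
move=> Hk.
have Hk1 : 1 <= INR k by apply: (le_INR 1); apply/leP.
apply: (Rle_trans _ (\big[Rplus/0]_x \big[Rplus/0]_y (Kr (y == x) + p x * p y))).
  apply: sum_le => x; apply: sum_le => y.
  rewrite C_formula //.
  have [hp1 hp2] := p01 x; have [hq1 hq2] := p01 y; have [hr1 hr2] := q01 x.
  have ha := alpha2; have ha0 : 0 <= alphaR eps ^ 2 by nra.
  case: (eqVneq x y) => [<-|Hxy].
    rewrite /Kr.
    have -> : (1 * (q x - q x ^ 2 + alphaR eps ^ 2 * p x ^ 2) - alphaR eps ^ 2 * p x * p x)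
       = q x - q x ^ 2 by ring.
    have hd : 0 <= q x - q x ^ 2 <= 1 by split; nra.
    nra.
  rewrite /Kr.
  have h1 : 0 <= p x * p y <= 1 by split; nra.
  have h2 : alphaR eps ^ 2 * p x * p y <= p x * p y by nra.
  have h3 : 0 <= alphaR eps ^ 2 * p x * p y by nra.
  nra.
have -> : \big[Rplus/0]_x \big[Rplus/0]_y (Kr (y == x) + p x * p y) = INR k + 1.
  transitivity (\big[Rplus/0]_(x < k) 1 + \big[Rplus/0]_x p x); last first.
    by rewrite sum_const (sum_p Hp); ring.
  rewrite -big_split; apply: eq_bigr => x _.
  transitivity (\big[Rplus/0]_y (Kr (y == x) * 1) + p x * \big[Rplus/0]_y p y).
    by rewrite big_distrr -big_split; apply: eq_bigr => y _ /=; ring.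
  by rewrite sumK (sum_p Hp) /=; ring.
lra.
Qed.

Lemma mu_sum : \big[Rplus/0]_x (mu x ^ 2) = alphaR eps ^ 2 * dist2_unif p.
Proof.
rewrite /dist2_unif big_distrr; apply: eq_bigr => x _ /=.
rewrite /mu /q /lam /Rdiv; ring.
Qed.

Lemma Qv_le : Qv <= 2 * \big[Rplus/0]_x (mu x ^ 2).
Proof.
set S := \big[Rplus/0]_y (mu y * p y).
pose D x := q x - q x ^ 2 + alphaR eps ^ 2 * p x ^ 2.
have HQ : Qv = \big[Rplus/0]_x (mu x ^ 2 * D x) + (- alphaR eps ^ 2) * (S * S).
  rewrite /Qv /S big_distrl big_distrr -big_split; apply: eq_bigr => x _ /=.
  transitivity (\big[Rplus/0]_y (Kr (y == x) * (mu x * mu y * D x))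
      + (- alphaR eps ^ 2 * mu x * p x) * \big[Rplus/0]_y (mu y * p y)).
    rewrite big_distrr -big_split; apply: eq_bigr => y _ /=.
    rewrite C_formula // eq_sym /D; kring.
  rewrite sumK /D /=; set S1 := \big[_/_]_(_ < k) _; ring.
rewrite HQ.
have h1 : 0 <= alphaR eps ^ 2 * (S * S) by nra.
have h2 : \big[Rplus/0]_x (mu x ^ 2 * D x) <= \big[Rplus/0]_x (2 * mu x ^ 2).
  apply: sum_le => x; rewrite /D.
  have [hq1 hq2] := q01 x; have [hp1 hp2] := p01 x; have ha := alpha2.
  have hd : q x - q x ^ 2 + alphaR eps ^ 2 * p x ^ 2 <= 2 by nra.
  have hm : 0 <= mu x ^ 2 by nra.
  nra.
rewrite -big_distrr /= in h2.
set M1 := \big[_/_]_x (mu x ^ 2) in h2 *; set M2 := \big[_/_]_x (mu x ^ 2 * _) in h2 *; lra.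
Qed.
End Bounds.

Lemma Exp_one k n p eps : is_dist p -> Exp p eps (fun _ : sample k n => 1) = 1.
Proof.
move=> Hp.
transitivity (Exp p eps (fun w : sample k n => \big[Rmult/1]_(j < n) (fun _ (_ : UT k) => 1) j (uj w j))).
  by apply: Exp_ext => w; rewrite big1_eq.
rewrite (@prodE k n p eps (fun _ _ => 1)) big1 // => j _; exact: E1_one.
Qed.

Unset Implicit Arguments.
Theorem lemma3p3 (k n : nat) (p : 'I_k -> R) (eps : R) :
  (0 < k)%N -> 0 < eps -> is_dist p ->
  Var p eps (@Tstat k n eps)
    <= 4 * INR k * INR n ^ 2 + 8 * INR n ^ 3 * alphaR eps ^ 2 * dist2_unif p.
Proof.
move=> Hk Heps Hp.
set a := Exp p eps (@Tstat k n eps).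
set c := INR n * (INR n - 1) * \big[Rplus/0]_x (@mu k p eps x ^ 2).
have HV : Var p eps (@Tstat k n eps) =
    Exp p eps (fun w : sample k n => (Tstat eps w - c) ^ 2) - (a - c) ^ 2.
  rewrite /Var -/a.
  transitivity (Exp p eps (fun w : sample k n => (Tstat eps w - c) ^ 2 +
        ((2 * (c - a)) * Tstat eps w + (a ^ 2 - c ^ 2) * 1))).
    by apply: Exp_ext => w; ring.
  rewrite !Exp_add !Exp_scal Exp_one // -/a. ring.
have HE : Exp p eps (fun w : sample k n => (Tstat eps w - c) ^ 2) =
    2 * (INR n * (INR n - 1)) * @Fv k p eps + 4 * (INR n - 1) ^ 2 * INR n * @Qv k p eps.
  transitivity (Exp p eps (fun w : sample k n => @Aw k n p eps w * @Aw k n p eps w +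
     (2 * (@Aw k n p eps w * @Bw k n p eps w) + @Bw k n p eps w * @Bw k n p eps w))).
    by apply: Exp_ext => w; rewrite (Tident p) /c; ring.
  rewrite !Exp_add Exp_scal EAA // EAB // EBB //; ring.
rewrite HV HE.
have hF := Fv_le eps Hp Hk.
have hQ := Qv_le eps Hp.
rewrite mu_sum in hQ.
set F := @Fv k p eps in hF *.
set Q := @Qv k p eps in hQ *.
set d := dist2_unif p in hQ *.
have hd : 0 <= d by apply: sum_ge0 => x; apply: pow2_ge_0.
have ha : 0 <= alphaR eps ^ 2 by nra.
have hk : 0 <= INR k by apply: pos_INR.
have hsq : 0 <= (a - c) ^ 2 by apply: pow2_ge_0.
have hN : INR n = 0 \/ 1 <= INR n.
  case: (n) => [|m]; [left; reflexivity | right; apply: (le_INR 1); lia].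
clearbody a c F Q d. move: (INR n) hN => N hN.
have hM : 0 <= alphaR eps ^ 2 * d by nra.
case: hN => hN.
  rewrite hN.
  have h0 : 0 * (0 - 1) = 0 by ring.
  have h0' : (0 - 1) ^ 2 * 0 = 0 by ring.
  have hN2 : 0 ^ 2 = 0 by ring.
  have hN3 : 0 ^ 3 = 0 by ring.
  rewrite h0 hN2 hN3.
  have -> : 4 * (0 - 1) ^ 2 * 0 = 0 by ring.
  lra.
have hN0 : 0 <= N - 1 by lra.
have hNN : 0 <= N * (N - 1) by apply: Rmult_le_pos; lra.
have h1 : 2 * (N * (N - 1)) * F <= 2 * (N * (N - 1)) * (2 * INR k).
  apply: Rmult_le_compat_l; last exact: hF. lra.
have hP : 0 <= (N - 1) ^ 2 * N by apply: Rmult_le_pos; [apply: pow2_ge_0 | lra].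
have h2 : 4 * (N - 1) ^ 2 * N * Q <= 4 * (N - 1) ^ 2 * N * (2 * (alphaR eps ^ 2 * d)).
  apply: Rmult_le_compat_l; last exact: hQ. lra.
have h3 : INR k * (N * (N - 1)) <= INR k * N ^ 2.
  apply: Rmult_le_compat_l => //.
  have -> : N ^ 2 = N * N by ring. apply: Rmult_le_compat_l; lra.
have h4 : (alphaR eps ^ 2 * d) * ((N - 1) ^ 2 * N) <= (alphaR eps ^ 2 * d) * N ^ 3.
  apply: Rmult_le_compat_l => //.
  have -> : N ^ 3 = N ^ 2 * N by ring.
  apply: Rmult_le_compat_r; first lra.
  have -> : N ^ 2 = N * N by ring.
  have -> : (N - 1) ^ 2 = (N - 1) * (N - 1) by ring.
  apply: Rmult_le_compat; lra.
lra.
Qed.
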